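(* Let $(M,A)$ be a $d$-dimensional BUT-manifold. Let $\{B_i,B_{-i}\}$, $i=1,\ldots,d+1$, be a family of closed subsets of $M$ with $B_{-i}=A(B_i)$ and $B_i\cap B_{-i}=\emptyset$ for all $i$. If this family covers $M$, then for every set of indices $\{k_1,\ldots,k_{d+1}\}\subset\{\pm1,\pm2,\ldots,\pm(d+1)\}$ with $|k_i|=i$ for all $i$, the intersection $\bigcap_{i=1}^{d+1}B_{k_i}$ is nonempty.
   Context: A BUT (Borsuk–Ulam type) manifold is a pair $(M,A)$ where $M$ is a connected compact piecewise-linear $d$-dimensional manifold without boundary and $A:M\to M$ is a free simplicial involution ($A(A(x))=x$, $A(x)\neq x$), such that for every continuous $g:M\to\mathbb{R}^d$ there is $x\in M$ with $g(A(x))=g(x)$. *)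

(* Defs.v *)
From HB Require Import structures.
From mathcomp Require Import all_boot all_order all_algebra.
From mathcomp Require Import all_classical all_reals all_analysis.
Set Implicit Arguments. Unset Strict Implicit. Unset Printing Implicit Defensive.
Import Order.TTheory GRing.Theory Num.Theory.
Import numFieldNormedType.Exports.
Local Open Scope classical_set_scope.
Local Open Scope ring_scope.

(* Piecewise-linear (PL) setting: polyhedra in R^N = 'rV[R]_N, triangulated
   by finite geometric simplicial complexes.  A simplex is given by the list
   of its vertices. *)

Section PL.
Variable R : realType.

(* convex hull of a list of points (empty list -> empty set) *)
Definition hull (N : nat) (s : seq 'rV[R]_N) : set 'rV[R]_N :=
  [set x | exists l : 'rV[R]_N -> R,
     [/\ forall v, v \in s -> 0 <= l v,
         \sum_(v <- s) l v = 1 &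
         x = \sum_(v <- s) l v *: v]].

Definition affine_indep (N : nat) (s : seq 'rV[R]_N) : bool :=
  match s with
  | [::] => true
  | v0 :: vs => row_free (\matrix_(i < size vs) (nth 0 vs i - v0))
  end.

Definition simplicial_complex (N : nat) (K : seq (seq 'rV[R]_N)) : Prop :=
  [/\ forall s, s \in K -> s != [::] /\ affine_indep s,
      forall s t, s \in K -> t != [::] -> {subset t <= s} ->
        exists2 t', t' \in K & t' =i t &
      (* two simplices meet in a common face (possibly empty) *)
      forall s t, s \in K -> t \in K ->
        hull s `&` hull t = hull [seq v <- s | v \in t]].

Definition polyhedron (N : nat) (K : seq (seq 'rV[R]_N)) : set 'rV[R]_N :=
  [set x | exists2 s, s \in K & hull s x].

Definition triangulates (N : nat) (K : seq (seq 'rV[R]_N)) (P : set 'rV[R]_N) :=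
  simplicial_complex K /\ polyhedron K = P.

Definition affine_on (N m : nat) (s : seq 'rV[R]_N) (f : 'rV[R]_N -> 'rV[R]_m) :=
  forall l : 'rV[R]_N -> R,
    (forall v, v \in s -> 0 <= l v) -> \sum_(v <- s) l v = 1 ->
    f (\sum_(v <- s) l v *: v) = \sum_(v <- s) l v *: f v.

Definition PL_on (N m : nat) (P : set 'rV[R]_N) (f : 'rV[R]_N -> 'rV[R]_m) :=
  exists K, triangulates K P /\ forall s, s \in K -> affine_on s f.

Definition PL_homeo (N m : nat) (P : set 'rV[R]_N) (Q : set 'rV[R]_m)
    (f : 'rV[R]_N -> 'rV[R]_m) :=
  exists g : 'rV[R]_m -> 'rV[R]_N,
    [/\ PL_on P f /\ PL_on Q g, f @` P `<=` Q, g @` Q `<=` P,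
        (forall x, P x -> g (f x) = x) & (forall y, Q y -> f (g y) = y)].

Definition std_simplex (d : nat) : set 'rV[R]_d :=
  hull (0 :: [seq delta_mx 0 i | i <- enum 'I_d]).

(* M is a compact PL d-manifold without boundary: M is a polyhedron, and
   every point x of M has a (polyhedral) neighbourhood in M which is
   PL homeomorphic to a d-ball (the standard d-simplex) with x sent to an
   interior point of the ball. *)
Definition PL_manifold (N d : nat) (M : set 'rV[R]_N) : Prop :=
  (exists K, triangulates K M) /\
  forall x, M x ->
    exists Q : set 'rV[R]_N, exists h : 'rV[R]_N -> 'rV[R]_d,
      [/\ Q `<=` M,
          (exists U : set 'rV[R]_N, [/\ open U, U x & U `&` M `<=` Q]),
          PL_homeo Q (@std_simplex d) h &
          interior (@std_simplex d) (h x)].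

Definition simplicial_map (N : nat) (M : set 'rV[R]_N) (A : 'rV[R]_N -> 'rV[R]_N) :=
  exists K, [/\ triangulates K M,
     forall s, s \in K -> affine_on s A &
     forall s, s \in K -> exists2 t, t \in K & t =i map A s].

Definition free_simplicial_involution (N : nat) (M : set 'rV[R]_N)
    (A : 'rV[R]_N -> 'rV[R]_N) :=
  [/\ simplicial_map M A,
      forall x, M x -> M (A x),
      forall x, M x -> A (A x) = x &
      forall x, M x -> A x != x].

Definition BUT_manifold (N d : nat) (M : set 'rV[R]_N) (A : 'rV[R]_N -> 'rV[R]_N) :=
  [/\ PL_manifold d M, connected M, free_simplicial_involution M A &
      forall g : 'rV[R]_N -> 'rV[R]_d, {within M, continuous g} ->
        exists2 x, M x & g (A x) = g x].

End PL.

(* Main.v *)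
Require Import Defs.
From HB Require Import structures.
From mathcomp Require Import all_boot all_order all_algebra.
From mathcomp Require Import all_classical all_reals all_analysis.
From mathcomp Require Import ring lra.
Import Order.TTheory GRing.Theory Num.Theory.
Import numFieldNormedType.Exports.
Local Open Scope classical_set_scope.
Local Open Scope ring_scope.
Set Implicit Arguments. Unset Strict Implicit. Unset Printing Implicit Defensive.
Section Ct.
Variable R : realType.
Lemma cont_sum (T : topologicalType) (V : normedModType R) (I : Type) (r : seq I)
  (f : I -> T -> V) x :
  (forall i, f i @ x --> f i x) -> (fun y => \sum_(i <- r) f i y) @ x --> \sum_(i <- r) f i x.
Proof.
move=> hf; elim: r => [|a r IH].
  rewrite big_nil; under eq_fun do rewrite big_nil; exact: cvg_cst.
rewrite big_cons; under eq_fun do rewrite big_cons.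
exact: cvgD.
Qed.

Lemma contB (T : topologicalType) (f g : T -> R) x :
  f @ x --> f x -> g @ x --> g x -> (fun y => f y - g y) @ x --> f x - g x.
Proof. by move=> hf hg; apply: cvgB. Qed.
Lemma contD (T : topologicalType) (f g : T -> R) x :
  f @ x --> f x -> g @ x --> g x -> (fun y => f y + g y) @ x --> f x + g x.
Proof. by move=> hf hg; apply: cvgD. Qed.
Lemma contM (T : topologicalType) (f g : T -> R) x :
  f @ x --> f x -> g @ x --> g x -> (fun y => f y * g y) @ x --> f x * g x.
Proof. by move=> hf hg; apply: cvgM. Qed.
Lemma contV (T : topologicalType) (f : T -> R) x : f x != 0 ->
  f @ x --> f x -> (fun y => (f y)^-1) @ x --> (f x)^-1.
Proof. by move=> h hf; apply: cvgV. Qed.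
Lemma contS (T : topologicalType) (f : T -> R) x :
  f @ x --> f x -> (fun y => Num.sqrt (f y)) @ x --> Num.sqrt (f x).
Proof. by move=> hf; apply: (cvg_comp _ _ hf); exact: sqrt_continuous. Qed.

Lemma row_cont (T : topologicalType) d (f : 'I_d -> T -> R) x :
  (forall i, f i @ x --> f i x) ->
  (fun y => \row_i f i y : 'rV[R]_d) @ x --> \row_i f i x.
Proof.
move=> hf.
have E y : \row_i f i y = \sum_(i < d) f i y *: (delta_mx 0 i : 'rV[R]_d).
  rewrite {1}(row_sum_delta (\row_i f i y)); apply: eq_bigr => i _; by rewrite mxE.
rewrite (funext E) E; apply: cont_sum => i; exact: cvgZr_tmp.
Qed.
End Ct.
Section Z.
Variables (R : realType) (V : normedModType R).

Lemma zero_fun (C : set V) : closed C ->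
  exists u : V -> R, [/\ continuous u, (forall x, 0 <= u x) & (forall x, u x = 0 <-> C x)].
Proof.
move=> clC.
have [->|/set0P[c0 Cc0]] := eqVneq C set0.
  exists (fun=> 1); split => //; first by move=> x; exact: cvg_cst.
  by move=> x; split => // /eqP; rewrite oner_eq0.
pose S x := [set `|x - y| | y in C].
have Sne x : nonempty (S x) by exists `|x - c0|; exists c0.
have Slb x : has_lbound (S x) by exists 0 => _ [y _ <-].
have Sinf x : has_inf (S x) by split.
pose u x := inf (S x).
have u0 x : 0 <= u x by apply: lb_le_inf => // _ [y _ <-].
have ule x y : C y -> u x <= `|x - y|.
  by move=> Cy; apply: ge_inf => //; exists y.
have lip x z : u x <= `|x - z| + u z.
  rewrite -lerBlDl; apply: lb_le_inf => // _ [y Cy <-].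
  rewrite lerBlDl (le_trans (ule x y Cy)) //.
  by rewrite (le_trans _ (ler_normD _ _)) // addrA subrK.
exists u; split => //.
- move=> x; apply/cvgrPdist_lt => e e0.
  near=> z.
  have : `|x - z| < e by near: z; exact: (@cvgr_dist_lt _ _ _ (nbhs x) _ id x cvg_id).
  move=> xz; have h1 := lip z x; have h2 := lip x z; rewrite distrC in h1.
  rewrite ltr_norml; apply/andP; split; lra.
- move=> x; split; last first.
    by move=> Cx; apply/eqP; rewrite eq_le u0 andbT (le_trans (ule x x Cx)) // subrr normr0.
  move=> ux0; apply: clC => B /nbhs_ballP[e /= e0 eB].
  have [_ [y Cy <-]] := inf_adherent e0 (Sinf x).
  rewrite -/(u x) ux0 add0r => xy.
  exists y; split => //; apply: eB; rewrite -ball_normE /ball_ /=.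
  done.
Unshelve. all: by end_near.
Qed.
End Z.
Section St.
Variable R : realType.

Definition Dn d (z : 'I_d.+1 -> R) := Num.sqrt (\sum_i z i ^+ 2) - z ord0.

Lemma sq_split d (z : 'I_d.+1 -> R) :
  \sum_i z i ^+ 2 = z ord0 ^+ 2 + \sum_(i < d) z (lift ord0 i) ^+ 2.
Proof. by rewrite big_ord_recl. Qed.

Lemma Dn_ge0 d (z : 'I_d.+1 -> R) : 0 <= Dn z.
Proof.
rewrite /Dn subr_ge0 sq_split.
have hs : 0 <= \sum_(i < d) z (lift ord0 i) ^+ 2 by apply: sumr_ge0 => i _; exact: sqr_ge0.
apply: (le_trans (ler_norm _)).
rewrite -(sqrtr_sqr (z ord0)) ler_sqrt ?lerDl //.
by rewrite addr_ge0 // sqr_ge0.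
Qed.

Lemma Dn_eq0 d (z : 'I_d.+1 -> R) : Dn z = 0 ->
  0 <= z ord0 /\ forall i : 'I_d, z (lift ord0 i) = 0.
Proof.
rewrite /Dn => /eqP; rewrite subr_eq0 => /eqP h.
have hs : 0 <= \sum_(i < d) z (lift ord0 i) ^+ 2 by apply: sumr_ge0 => i _; exact: sqr_ge0.
have z0 : 0 <= z ord0 by rewrite -h sqrtr_ge0.
split => // i.
have : \sum_(i < d) z (lift ord0 i) ^+ 2 = 0.
  have := congr1 (fun t => t ^+ 2) h; rewrite /= sqr_sqrtr; last first.
    by apply: sumr_ge0 => j _; exact: sqr_ge0.
  move=> e; rewrite sq_split in e; by apply: (addrI (z ord0 ^+ 2)); rewrite addr0.
move/eqP; rewrite psumr_eq0; last by move=> j _; exact: sqr_ge0.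
by move/allP/(_ i (mem_index_enum _)); rewrite sqrf_eq0 => /eqP.
Qed.

Lemma stereo d (z z' : 'I_d.+1 -> R) : 0 < Dn z -> 0 < Dn z' ->
  (forall i : 'I_d, z (lift ord0 i) / Dn z = z' (lift ord0 i) / Dn z') ->
  forall i, z' i * Dn z = z i * Dn z'.
Proof.
move=> Dp Dp' h.
set D := Dn z in Dp h *; set D' := Dn z' in Dp' h *.
set s := \sum_(i < d) z (lift ord0 i) ^+ 2.
set s' := \sum_(i < d) z' (lift ord0 i) ^+ 2.
have hs : 0 <= s by apply: sumr_ge0 => i _; exact: sqr_ge0.
have hs' : 0 <= s' by apply: sumr_ge0 => i _; exact: sqr_ge0.
set r := Num.sqrt (\sum_i z i ^+ 2).
set r' := Num.sqrt (\sum_i z' i ^+ 2).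
have er : r ^+ 2 = z ord0 ^+ 2 + s.
  rewrite /r sqr_sqrtr; first exact: sq_split.
  by apply: sumr_ge0 => i _; exact: sqr_ge0.
have er' : r' ^+ 2 = z' ord0 ^+ 2 + s'.
  rewrite /r' sqr_sqrtr; first exact: sq_split.
  by apply: sumr_ge0 => i _; exact: sqr_ge0.
have eD : D = r - z ord0 by [].
have eD' : D' = r' - z' ord0 by [].
have k : s / D ^+ 2 = s' / D' ^+ 2.
  rewrite /s /s' !mulr_suml; apply: eq_bigr => i _.
  by rewrite -!expr_div_n h.
have e1 : s / D ^+ 2 = (r + z ord0) / D.
  have -> : s = r ^+ 2 - z ord0 ^+ 2 by rewrite er; ring.
  rewrite eD; field; rewrite -eD; exact: lt0r_neq0.
have e2 : s' / D' ^+ 2 = (r' + z' ord0) / D'.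
  have -> : s' = r' ^+ 2 - z' ord0 ^+ 2 by rewrite er'; ring.
  rewrite eD'; field; rewrite -eD'; exact: lt0r_neq0.
have c0 : z' ord0 * D = z ord0 * D'.
  have hD : D != 0 by exact: lt0r_neq0.
  have hD' : D' != 0 by exact: lt0r_neq0.
  move: k; rewrite e1 e2 => k.
  have : (r + z ord0) * D' = (r' + z' ord0) * D.
    by apply/eqP; rewrite -eqr_div // k.
  move=> e.
  have er1 : r = D + z ord0 by rewrite eD; ring.
  have er2 : r' = D' + z' ord0 by rewrite eD'; ring.
  rewrite er1 er2 in e.
  nra.
move=> i; case: (unliftP ord0 i) => [j ->|->]; last exact: c0.
have := h j; move/eqP; rewrite eqr_div ?lt0r_neq0 // => /eqP e.
by rewrite e.
Qed.
End St.
Unset Implicit Arguments.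

Theorem theorem4p1 (R : realType) (N d : nat) (M : set 'rV[R]_N)
    (A : 'rV[R]_N -> 'rV[R]_N) (B : 'I_d.+1 -> bool -> set 'rV[R]_N) :
  BUT_manifold d M A ->
  (forall i b, B i b `<=` M /\ closed (B i b)) ->
  (forall i, B i false = A @` B i true) ->
  (forall i, B i true `&` B i false = set0) ->
  M `<=` \bigcup_(i in [set: 'I_d.+1]) (B i true `|` B i false) ->
  forall k : 'I_d.+1 -> bool, exists x, forall i, B i (k i) x.
Proof.
move=> [_ _ [_ MA AA _] BUTg] Bcl Bf Bdisj Bcov k.
have [//|nex] := pselect (exists x, forall i, B i (k i) x).
exfalso.
have flip i b x : B i b x -> B i (~~ b) (A x).
  case: b => /= h; first by rewrite Bf; exists x.
  move: h; rewrite Bf => -[y Hy <-]; rewrite AA //; exact: (proj1 (Bcl i true)).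
have disj i b x : B i b x -> B i (~~ b) x -> False.
  have H : ~ (B i true `&` B i false) x by rewrite Bdisj.
  by case: b => /= h1 h2; apply: H.
pose C i := B i (k i); pose D i := B i (~~ k i).
have [u hu] := choice (fun i => zero_fun (proj2 (Bcl i (k i)))).
have [w hw] := choice (fun i => zero_fun (proj2 (Bcl i (~~ k i)))).
have pos i x : 0 < u i x + w i x.
  have [_ u0 uC] := hu i; have [_ w0 wD] := hw i.
  have := u0 x; have := w0 x.
  rewrite le_eqVlt => /orP[/eqP wx|wx]; rewrite le_eqVlt => /orP[/eqP ux|ux].
  - by exfalso; apply: (disj i (k i) x); [apply/uC|apply/wD].
  - by rewrite -wx addr0.
  - by rewrite -ux add0r.
  - exact: addr_gt0.
pose F i x := (w i x - u i x) / (u i x + w i x).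
have FC i x : C i x -> F i x = 1.
  move=> Cx; have [_ _ uC] := hu i; have ux : u i x = 0 by apply/uC.
  have wp : 0 < w i x by have := pos i x; rewrite ux add0r.
  by rewrite /F ux subr0 add0r divff // lt0r_neq0.
have FD i x : D i x -> F i x = -1.
  move=> Dx; have [_ _ wD] := hw i; have wx : w i x = 0 by apply/wD.
  have up : 0 < u i x by have := pos i x; rewrite wx addr0.
  by rewrite /F wx sub0r addr0 mulNr divff // lt0r_neq0.
have F1 i x : F i x = 1 -> C i x.
  move=> e; have [_ _ uC] := hu i; apply/uC.
  have e2 : w i x - u i x = u i x + w i x.
    by rewrite -[RHS]mul1r -e /F divfK // lt0r_neq0.
  lra.
have cov x : M x -> exists j, C j x \/ D j x.
  move=> Mx; have [j _ h] := Bcov x Mx; exists j.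
  by rewrite /C /D; case: (k j) => /=; case: h => h; [left|right|right|left].
have Fcont i : continuous (F i).
  move=> x; have [uc _ _] := hu i; have [wc _ _] := hw i.
  apply: (contM (f := fun y => w i y - u i y) (g := fun y => (u i y + w i y)^-1)).
    exact: (contB (wc x) (uc x)).
  apply: (contV (f := fun y => u i y + w i y)); first exact: lt0r_neq0.
  exact: (contD (uc x) (wc x)).
pose G (x : 'rV[R]_N) (i : 'I_d.+1) :=
  if i == ord0 then \sum_j F j x else F i x - F ord0 x.
have Gcont i : continuous (fun x => G x i).
  move=> x; rewrite /G; case: (i == ord0).
    by apply: cont_sum => j; exact: Fcont.
  exact: (contB (Fcont i x) (Fcont ord0 x)).
have Dcont : continuous (fun x => Dn (G x)).
  move=> x; rewrite /Dn.
  apply: (contB (f := fun y => Num.sqrt (\sum_i G y i ^+ 2)) (g := fun y => G y ord0)); last exact: Gcont.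
  apply: (contS (f := fun y => \sum_i G y i ^+ 2)).
  apply: cont_sum => i; under eq_fun do rewrite expr2; rewrite expr2.
  exact: (contM (Gcont i x) (Gcont i x)).
have GL x (j : 'I_d) : G x (lift ord0 j) = F (lift ord0 j) x - F ord0 x.
  by rewrite /G eq_sym (negbTE (neq_lift ord0 j)).
have G0 x : G x ord0 = \sum_j F j x by rewrite /G eqxx.
have Dpos x : M x -> 0 < Dn (G x).
  move=> Mx; rewrite lt_neqAle Dn_ge0 andbT; apply/eqP => /esym /Dn_eq0 [h0 hl].
  have eqF j : F j x = F ord0 x.
    case: (unliftP ord0 j) => [j' ->|-> //].
    by apply/eqP; rewrite -subr_eq0 -GL hl.
  have es : \sum_j F j x = \sum_(j < d.+1) F ord0 x by apply: eq_bigr => j _; exact: eqF.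
  rewrite G0 es sumr_const card_ord in h0.
  have F0 : 0 <= F ord0 x by rewrite -mulr_natr pmulr_lge0 ?ltr0n in h0.
  have [j [Cj|Dj]] := cov x Mx.
    apply: nex; exists x => i; apply: (F1 i x); by rewrite eqF -(eqF j) FC.
  by move: F0; rewrite -(eqF j) FD //; lra.
pose g x := \row_(i < d) (G x (lift ord0 i) / Dn (G x)).
have gcont : {within M, continuous g}.
  apply: continuous_in_subspaceT => x /set_mem Mx.
  apply: row_cont => i.
  apply: (contM (f := fun y => G y (lift ord0 i)) (g := fun y => (Dn (G y))^-1)); first exact: Gcont.
  apply: (contV (f := fun y => Dn (G y))); first exact: lt0r_neq0 (Dpos x Mx).
  exact: Dcont.
have [x Mx e] := BUTg g gcont.
have MAx := MA x Mx.
have hst : forall i : 'I_d, G (A x) (lift ord0 i) / Dn (G (A x)) = G x (lift ord0 i) / Dn (G x).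
  by move=> i; have := congr1 (fun m : 'rV[R]_d => m 0 i) e; rewrite /g !mxE.
have st := stereo (Dpos _ MAx) (Dpos _ Mx) hst.
have P1 := Dpos _ MAx; have P2 := Dpos _ Mx.
move: st P1 P2; set D1 := Dn (G (A x)); set D2 := Dn (G x) => st P1 P2.
pose del := F ord0 x * D1 - F ord0 (A x) * D2.
have hj j : F j x * D1 - F j (A x) * D2 = del.
  case: (unliftP ord0 j) => [j' ->|-> //].
  have := st (lift ord0 j'); rewrite !GL /del => h.
  rewrite !mulrBl in h; lra.
have hsum : del *+ d.+1 = 0.
  rewrite -(card_ord d.+1) -sumr_const.
  rewrite -(eq_bigr _ (fun j _ => hj j)) sumrB -!mulr_suml -!G0.
  by rewrite st subrr.
have del0 : del = 0.
  by move/eqP: hsum; rewrite mulrn_eq0 /= => /eqP.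
have hF j : F j x * D1 = F j (A x) * D2.
  by apply/eqP; rewrite -subr_eq0 hj del0.
have [j [Cj|Dj]] := cov x Mx.
  have DA : D j (A x) by exact: (flip j (k j) x Cj).
  by move: (hF j); rewrite FC // FD //; lra.
have CA : C j (A x) by rewrite /C -[k j]negbK; exact: (flip j (~~ k j) x Dj).
by move: (hF j); rewrite FD // FC //; lra.
Qed.
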